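(* Let $T\ge 2$, let $z_{1:T}\in[V]^T$ with last token $z_T=q$, and suppose the orthonormality assumption (A) holds. For $v\in[V]$ let $f(v)=\#\{s\in\{2,\dots,T\}: z_{s-1}=q,\ z_s=v\}$, the number of occurrences of the pattern ''$q\,v$'' in $z_{1:T}$. Let $N=\sum_{v'=1}^{V}f(v')+\mathbf 1\{z_1=q\}$ and assume $N\ge 1$. Then for every $v\in[V]$ and every fixed $\tau_3>0$, $$\lim_{\tau_2\to\infty}\ \lim_{\tau_1\to\infty}\ \xi_v(\tau_1,\tau_2,\tau_3)\;=\;\log\pi_b(v\mid q)\;+\;\tau_3\cdot\frac{f(v)+\mathbf 1\{v=q\}\,\mathbf 1\{z_1=q\}}{N}.$$
   Context: Vocabulary $[V]=\{1,\dots,V\}$, dimension $d$. Given: embedding vectors $w_E(v)\in\mathbb R^d$ and unembedding vectors $w_U(v)\in\mathbb R^d$ for $v\in[V]$; relative positional vectors $r_0,r_{-1},\dots,r_{-(T-1)}\in\mathbb R^d$; matrices $\Phi_1,W_V^2\in\mathbb R^{d\times d}$; a bigram kernel $\pi_b(u\mid v)>0$ with $\sum_u\pi_b(u\mid v)=1$; parameters $\tau_1,\tau_2,\tau_3>0$. $\sigma$ denotes the softmax. The two-layer transformer with relative positional encoding (''stronger associative memory transformer'') acts on $z_{1:T}\in[V]^T$ as follows. Set $W_K^1=\tau_1\sum_{k\in[V]}w_E(k)r_{-1}^\top$, $W_K^2=\tau_2\sum_{k\in[V]}w_E(k)(\Phi_1w_E(k))^\top$, $W_O^2=\tau_3\sum_{v\in[V]}w_U(v)(W_V^2w_E(v))^\top$.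 First layer: for $t\in[T]$ and $s\in[t]$, let $a_{t,s}=(w_E(z_s)+r_{s-t})^\top (W_K^1)^\top w_E(z_t)$ and $x^{(1)}_t=\sum_{s=1}^t\sigma(a_{t,\cdot})_s\,\Phi_1w_E(z_s)+w_E(z_t)$. Second layer: for $s\in[T]$ let $b_s=(x_s^{(1)})^\top (W_K^2)^\top x_T^{(1)}$ and $x_T^{(2)}=\sum_{s=1}^T\sigma(b)_s\,W_O^2W_V^2x_s^{(1)}+x_T^{(1)}$. Feed-forward layer: $W_1\in\mathbb R^{V\times d}$ has $v$-th row $w_E(v)^\top$, $W_2\in\mathbb R^{d\times V}$ has $v$-th column $\sum_{u=1}^V\log\pi_b(u\mid v)\,w_U(u)$, and $x_T=W_2\,\mathrm{ReLU}(W_1x_T^{(2)})+x_T^{(2)}$. The logits are $\xi_v=w_U(v)^\top x_T$ for $v\in[V]$ (written $\xi_v(\tau_1,\tau_2,\tau_3)$ to show dependence on the parameters). The associative memory transformer is the case $\tau_1=\tau_2=\tau_3=1$. Orthonormality assumption (A): the $3V+T$ vectors $w_E(v),\ \Phi_1w_E(v),\ w_U(v)$ ($v\in[V]$) and $r_{-i}$ ($0\le i\le T-1$) form an orthonormal family in $\mathbb R^d$, and the $2V$ vectors $W_V^2w_E(v),\ W_V^2\Phi_1w_E(v)$ ($v\in[V]$) form an orthonormal family in $\mathbb R^d$. *)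

(* Defs.v *)
From HB Require Import structures.
From mathcomp Require Import all_boot all_order all_algebra.
From mathcomp Require Import all_classical all_reals all_analysis.
Set Implicit Arguments. Unset Strict Implicit. Unset Printing Implicit Defensive.
Import Order.TTheory GRing.Theory Num.Theory.
Local Open Scope ring_scope.

(* Conventions: vectors of R^d are column vectors 'cV[R]_d; positions are
   0-based: the paper's z_1..z_T are z 0 .. z (T-1); the paper's r_{-i}
   (0 <= i <= T-1) is r i. Vocabulary [V] is 'I_V. *)

Section Transformer.
Variables (R : realType) (V d : nat).

Definition dotv (u v : 'cV[R]_d) : R := (u^T *m v) 0 0.

Definition orthonormal_fam (I : finType) (f : I -> 'cV[R]_d) : Prop :=
  forall i j, dotv (f i) (f j) = (i == j)%:R.

Definition softmax (n : nat) (a : nat -> R) (s : nat) : R :=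
  expR (a s) / \sum_(0 <= s' < n) expR (a s').

Definition relu_v (m : nat) (x : 'cV[R]_m) : 'cV[R]_m := map_mx (fun y => Num.max y 0) x.

Variables (wE wU : 'I_V -> 'cV[R]_d) (r : nat -> 'cV[R]_d)
          (Phi1 WV2 : 'M[R]_d) (pib : 'I_V -> 'I_V -> R) (* pib u v = pi_b(u|v) *)
          (T : nat) (z : nat -> 'I_V).

Definition WK1 (tau1 : R) : 'M[R]_d := tau1 *: \sum_(k < V) (wE k *m (r 1%N)^T).
Definition WK2 (tau2 : R) : 'M[R]_d := tau2 *: \sum_(k < V) (wE k *m (Phi1 *m wE k)^T).
Definition WO2 (tau3 : R) : 'M[R]_d := tau3 *: \sum_(v < V) (wU v *m (WV2 *m wE v)^T).

(* first layer; t, s are 0-based positions with s <= t *)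
Definition attn1 (tau1 : R) (t s : nat) : R :=
  dotv (wE (z s) + r (t - s)%N) ((WK1 tau1)^T *m wE (z t)).

Definition x1 (tau1 : R) (t : nat) : 'cV[R]_d :=
  \sum_(0 <= s < t.+1) softmax t.+1 (attn1 tau1 t) s *: (Phi1 *m wE (z s)) + wE (z t).

Definition attn2 (tau1 tau2 : R) (s : nat) : R :=
  dotv (x1 tau1 s) ((WK2 tau2)^T *m x1 tau1 T.-1).

Definition x2 (tau1 tau2 tau3 : R) : 'cV[R]_d :=
  \sum_(0 <= s < T) softmax T (attn2 tau1 tau2) s *: (WO2 tau3 *m WV2 *m x1 tau1 s)
  + x1 tau1 T.-1.

Definition W1 : 'M[R]_(V, d) := \matrix_(v < V, j < d) wE v j 0.
Definition W2 : 'M[R]_(d, V) :=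
  \matrix_(i < d, v < V) (\sum_(u < V) ln (pib u v) *: wU u) i 0.

Definition xT (tau1 tau2 tau3 : R) : 'cV[R]_d :=
  W2 *m relu_v (W1 *m x2 tau1 tau2 tau3) + x2 tau1 tau2 tau3.

Definition xi (tau1 tau2 tau3 : R) (v : 'I_V) : R := dotv (wU v) (xT tau1 tau2 tau3).

Definition fcount (q v : 'I_V) : nat :=
  \sum_(1 <= s < T) ((z s.-1 == q) && (z s == v) : nat).

Definition Ncount (q : 'I_V) : nat :=
  (\sum_(v' < V) fcount q v' + (z 0%N == q : nat))%N.

End Transformer.

(* Main.v *)
Require Import Defs.
From HB Require Import structures.
From mathcomp Require Import all_boot all_order all_algebra.
From mathcomp Require Import all_classical all_reals all_analysis.
Import Order.TTheory GRing.Theory Num.Theory.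
Import numFieldTopology.Exports numFieldNormedType.Exports.
Local Open Scope classical_set_scope.
Local Open Scope ring_scope.
From mathcomp Require Import ring lra zify.
Section Dot.
Variables (R : realType) (d : nat).
Implicit Types (u v w x y : 'cV[R]_d).

Lemma dotvE u v : dotv u v = \sum_j u j 0 * v j 0.
Proof. by rewrite /dotv mxE; apply: eq_bigr => j _; rewrite mxE. Qed.
Lemma dotvC u v : dotv u v = dotv v u.
Proof. by rewrite !dotvE; apply: eq_bigr => j _; rewrite mulrC. Qed.
Lemma dotvDr u v w : dotv u (v + w) = dotv u v + dotv u w.
Proof. by rewrite /dotv mulmxDr mxE. Qed.
Lemma dotvZr u (a : R) v : dotv u (a *: v) = a * dotv u v.
Proof. by rewrite /dotv -scalemxAr mxE. Qed.
Lemma dotv_sumr u (I : Type) (rr : seq I) (P : pred I) (F : I -> 'cV[R]_d) :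
  dotv u (\sum_(i <- rr | P i) F i) = \sum_(i <- rr | P i) dotv u (F i).
Proof. by rewrite /dotv mulmx_sumr summxE. Qed.
Lemma dotvDl u v w : dotv (v + w) u = dotv v u + dotv w u.
Proof. by rewrite dotvC dotvDr !(dotvC u). Qed.
Lemma dotvZl u (a : R) v : dotv (a *: v) u = a * dotv v u.
Proof. by rewrite dotvC dotvZr dotvC. Qed.
Lemma dotv_suml u (I : Type) (rr : seq I) (P : pred I) (F : I -> 'cV[R]_d) :
  dotv (\sum_(i <- rr | P i) F i) u = \sum_(i <- rr | P i) dotv (F i) u.
Proof. by rewrite dotvC dotv_sumr; apply: eq_bigr => i _; rewrite dotvC. Qed.
Lemma dotv_mul (A : 'M[R]_d) u x : dotv u (A^T *m x) = dotv (A *m u) x.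
Proof. by rewrite /dotv mulmxA trmx_mul. Qed.
Lemma outerE x y w : (x *m y^T) *m w = dotv y w *: x.
Proof. by rewrite -mulmxA [y^T *m w]mx11_scalar mul_mx_scalar. Qed.
End Dot.

Lemma sum_ind (R : realType) (V : nat) (j : 'I_V) (F : 'I_V -> R) :
  \sum_(k < V) (k == j)%:R * F k = F j.
Proof.
rewrite (bigD1 j) //= eqxx mul1r big1 ?addr0 // => k /negbTE ->; by rewrite mul0r.
Qed.

Lemma sum_indZ (R : realType) (M : lmodType R) (V : nat) (j : 'I_V) (F : 'I_V -> M) :
  \sum_(k < V) (k == j)%:R *: F k = F j.
Proof.
rewrite (bigD1 j) //= eqxx scale1r big1 ?addr0 // => k /negbTE ->; by rewrite scale0r.
Qed.

From mathcomp Require Import ring lra zify.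

Lemma lim_ratio (R : realType) (a b n c : R) (f : R -> R) : 0 < n -> 0 <= c ->
  (forall t, f t = (a * expR t + b) / (n * expR t + c)) ->
  f t @[t --> +oo] --> a / n.
Proof.
move=> hn hc hf.
have -> : f = fun t => (a + b * expR (- t)) / (n + c * expR (- t)).
  apply/funext => t; rewrite hf expRN.
  have he : 0 < expR t := expR_gt0 t.
  have hd : 0 < n * expR t + c by have := mulr_gt0 hn he; lra.
  have hd' : 0 < n + c * (expR t)^-1.
    have hi : 0 < (expR t)^-1 by rewrite invr_gt0.
    by have := mulr_ge0 hc (ltW hi); lra.
  by field; rewrite (gt_eqF he) (gt_eqF hd).
have he := @cvgr_expR R.
have -> : a / n = (a + b * 0) / (n + c * 0) by rewrite !mulr0 !addr0.
apply: cvgM.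
  by apply: cvgD; [exact: cvg_cst | apply: cvgM; [exact: cvg_cst | exact: he]].
apply: cvgV; first by rewrite mulr0 addr0 gt_eqF.
by apply: cvgD; [exact: cvg_cst | apply: cvgM; [exact: cvg_cst | exact: he]].
Qed.

Lemma cvg_ext {R : realType} {f : R -> R} (g : R -> R) {l : R} : (forall t, f t = g t) ->
  g t @[t --> +oo] --> l -> f t @[t --> +oo] --> l.
Proof. by move=> h; have -> : f = g by apply/funext. Qed.

Lemma expR_ind (R : realType) (t : R) (b : bool) : expR (t * b%:R) = 1 + (expR t - 1) * b%:R.
Proof. by case: b; rewrite ?mulr1 ?mulr0 ?expR0 ?addr0 // addrC subrK. Qed.

Lemma sum_nat_ind (R : realType) (m j : nat) (G : nat -> R) : (j < m)%N ->
  \sum_(0 <= s < m) (s == j)%:R * G s = G j.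
Proof.
move=> hj; rewrite big_mkord (bigD1 (Ordinal hj)) //= eqxx mul1r big1 ?addr0 // => s hs.
rewrite (_ : (nat_of_ord s == j) = false) ?mul0r //.
by apply: contraNF hs => /eqP h; apply/eqP/val_inj.
Qed.

Lemma softmax_sum (R : realType) (m : nat) (a w : nat -> R) :
  \sum_(0 <= s < m) softmax m a s * w s =
  (\sum_(0 <= s < m) expR (a s) * w s) / \sum_(0 <= s < m) expR (a s).
Proof. by rewrite mulr_suml; apply: eq_bigr => s _; rewrite /softmax mulrAC. Qed.

Lemma cvg_sum_seq (R : realType) (rr : seq nat) (F : nat -> R -> R) (l : nat -> R) :
  (forall i, i \in rr -> F i t @[t --> +oo] --> l i) ->
  (\sum_(i <- rr) F i t) @[t --> +oo] --> \sum_(i <- rr) l i.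
Proof.
elim: rr => [|i rr IH] h.
  rewrite big_nil; apply: (cvg_ext (fun _ => 0)); first by move=> t; rewrite big_nil.
  exact: cvg_cst.
rewrite big_cons; apply: (cvg_ext (fun t => F i t + \sum_(j <- rr) F j t)).
  by move=> t; rewrite big_cons.
apply: cvgD; first by apply: h; rewrite inE eqxx.
by apply: IH => j hj; apply: h; rewrite inE hj orbT.
Qed.
Section Main.
Variables (R : realType) (V d : nat) (wE wU : 'I_V -> 'cV[R]_d) (r : nat -> 'cV[R]_d)
  (Phi1 WV2 : 'M[R]_d) (pib : 'I_V -> 'I_V -> R) (T : nat) (z : nat -> 'I_V) (q : 'I_V).
Hypotheses (HT : (2 <= T)%N) (Hq : z T.-1 = q).
Hypothesis H1 : orthonormal_fam (fun i : ('I_V + 'I_V) + ('I_V + 'I_T) =>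
    match i with
    | inl (inl v) => wE v
    | inl (inr v) => Phi1 *m wE v
    | inr (inl v) => wU v
    | inr (inr k) => r (val k)
    end).
Hypothesis H2 : orthonormal_fam (fun i : 'I_V + 'I_V =>
    match i with
    | inl v => WV2 *m wE v
    | inr v => WV2 *m (Phi1 *m wE v)
    end).

Lemma oEE a b : dotv (wE a) (wE b) = (a == b)%:R.
Proof. exact: (H1 (inl (inl a)) (inl (inl b))). Qed.
Lemma oEP a b : dotv (wE a) (Phi1 *m wE b) = 0.
Proof. exact: (H1 (inl (inl a)) (inl (inr b))). Qed.
Lemma oPE a b : dotv (Phi1 *m wE a) (wE b) = 0.
Proof. exact: (H1 (inl (inr a)) (inl (inl b))). Qed.
Lemma oPP a b : dotv (Phi1 *m wE a) (Phi1 *m wE b) = (a == b)%:R.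
Proof. exact: (H1 (inl (inr a)) (inl (inr b))). Qed.
Lemma oUE a b : dotv (wU a) (wE b) = 0.
Proof. exact: (H1 (inr (inl a)) (inl (inl b))). Qed.
Lemma oUP a b : dotv (wU a) (Phi1 *m wE b) = 0.
Proof. exact: (H1 (inr (inl a)) (inl (inr b))). Qed.
Lemma oUU a b : dotv (wU a) (wU b) = (a == b)%:R.
Proof. exact: (H1 (inr (inl a)) (inr (inl b))). Qed.
Lemma orE i b : (i < T)%N -> dotv (r i) (wE b) = 0.
Proof. move=> hi; exact: (H1 (inr (inr (Ordinal hi))) (inl (inl b))). Qed.
Lemma orr i j : (i < T)%N -> (j < T)%N -> dotv (r i) (r j) = (i == j)%:R.
Proof. move=> hi hj; exact: (H1 (inr (inr (Ordinal hi))) (inr (inr (Ordinal hj)))). Qed.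
Lemma oWW a b : dotv (WV2 *m wE a) (WV2 *m wE b) = (a == b)%:R.
Proof. exact: (H2 (inl a) (inl b)). Qed.
Lemma oWP a b : dotv (WV2 *m wE a) (WV2 *m (Phi1 *m wE b)) = 0.
Proof. exact: (H2 (inl a) (inr b)). Qed.


Lemma L1 tau1 t k : dotv (wE k) (x1 wE r Phi1 z tau1 t) = (k == z t)%:R.
Proof.
rewrite /x1 dotvDr dotv_sumr big1 ?add0r; first exact: oEE.
by move=> s _; rewrite dotvZr oEP mulr0.
Qed.

Lemma L2 tau1 t k : dotv (wU k) (x1 wE r Phi1 z tau1 t) = 0.
Proof.
rewrite /x1 dotvDr dotv_sumr big1 ?add0r; first exact: oUE.
by move=> s _; rewrite dotvZr oUP mulr0.
Qed.

Lemma Lbeta tau1 t : dotv (x1 wE r Phi1 z tau1 t) (Phi1 *m wE q) =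
  \sum_(0 <= s < t.+1) softmax t.+1 (attn1 wE r z tau1 t) s * (z s == q)%:R.
Proof.
rewrite /x1 dotvDl dotv_suml oEP addr0; apply: eq_bigr => s _.
by rewrite dotvZl oPP.
Qed.

Lemma Lattn2 tau1 tau2 s : attn2 wE r Phi1 T z tau1 tau2 s =
  tau2 * dotv (x1 wE r Phi1 z tau1 s) (Phi1 *m wE q).
Proof.
rewrite /attn2 dotv_mul /WK2 -scalemxAl mulmx_suml dotvZl dotv_suml.
under eq_bigr => k _ do rewrite outerE dotvZl L1 Hq mulrC.
by rewrite sum_ind dotvC.
Qed.

Lemma Lattn1 tau1 t s : (t < T)%N -> attn1 wE r z tau1 t s = tau1 * (t - s == 1)%N%:R.
Proof.
move=> ht.
have h1 : (1 < T)%N by [].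
have hts : (t - s < T)%N by apply: leq_ltn_trans ht; apply: leq_subr.
rewrite /attn1 dotv_mul /WK1 -scalemxAl mulmx_suml dotvZl dotv_suml.
under eq_bigr => k _ do rewrite outerE dotvZl oEE mulrC.
by rewrite sum_ind dotvDr orE // orr // add0r eq_sym.
Qed.

Lemma LWV tau1 s v : dotv (WV2 *m wE v) (WV2 *m x1 wE r Phi1 z tau1 s) = (v == z s)%:R.
Proof.
rewrite /x1 mulmxDr mulmx_sumr dotvDr dotv_sumr big1 ?add0r; first exact: oWW.
by move=> s' _; rewrite -scalemxAr dotvZr oWP mulr0.
Qed.

Lemma LWO tau1 tau3 s : WO2 wE wU WV2 tau3 *m WV2 *m x1 wE r Phi1 z tau1 s = tau3 *: wU (z s).
Proof.
rewrite -mulmxA /WO2 -scalemxAl mulmx_suml.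
under eq_bigr => v _ do rewrite outerE LWV.
by rewrite sum_indZ.
Qed.

Lemma Lx2 tau1 tau2 tau3 : x2 wE wU r Phi1 WV2 T z tau1 tau2 tau3 =
  \sum_(0 <= s < T) softmax T (attn2 wE r Phi1 T z tau1 tau2) s *: (tau3 *: wU (z s))
  + x1 wE r Phi1 z tau1 T.-1.
Proof. by rewrite /x2; congr (_ + _); apply: eq_bigr => s _; rewrite LWO. Qed.

Lemma Lx2E tau1 tau2 tau3 k : dotv (wE k) (x2 wE wU r Phi1 WV2 T z tau1 tau2 tau3) = (k == q)%:R.
Proof.
rewrite Lx2 dotvDr dotv_sumr big1 ?add0r; first by rewrite L1 Hq.
by move=> s _; rewrite !dotvZr dotvC oUE !mulr0.
Qed.

Lemma Lx2U tau1 tau2 tau3 v : dotv (wU v) (x2 wE wU r Phi1 WV2 T z tau1 tau2 tau3) =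
  tau3 * \sum_(0 <= s < T) softmax T (attn2 wE r Phi1 T z tau1 tau2) s * (z s == v)%:R.
Proof.
rewrite Lx2 dotvDr L2 addr0 dotv_sumr mulr_sumr; apply: eq_bigr => s _.
by rewrite !dotvZr oUU eq_sym mulrCA.
Qed.

Lemma LFF (y : 'cV[R]_d) : (forall k, dotv (wE k) y = (k == q)%:R) ->
  W2 wU pib *m relu_v (W1 wE *m y) = \sum_(u < V) ln (pib u q) *: wU u.
Proof.
move=> hy; apply/matrixP => i j; rewrite [j]ord1 !mxE.
under eq_bigr => k _ do rewrite !mxE.
have hk : forall k : 'I_V, (\sum_j0 W1 wE k j0 * y j0 0) = (k == q)%:R.
  by move=> k; rewrite -hy dotvE; apply: eq_bigr => j0 _; rewrite mxE.
have hm : forall k : 'I_V, Num.max ((k == q)%:R : R) 0 = (k == q)%:R.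
  by move=> k; rewrite max_l // ler0n.
under eq_bigr => k _ do rewrite hk hm mulrC.
by rewrite sum_ind.
Qed.

Lemma Lxi tau1 tau2 tau3 v : xi wE wU r Phi1 WV2 pib T z tau1 tau2 tau3 v =
  ln (pib v q) + tau3 * \sum_(0 <= s < T)
    softmax T (fun s => tau2 * dotv (x1 wE r Phi1 z tau1 s) (Phi1 *m wE q)) s * (z s == v)%:R.
Proof.
rewrite /xi /xT dotvDr (@LFF _ (Lx2E tau1 tau2 tau3)).
rewrite Lx2U dotv_sumr.
under eq_bigr => u _ do rewrite dotvZr oUU.
have -> : \sum_(u < V) ln (pib u q) * (v == u)%:R = ln (pib v q).
  rewrite -[RHS](@sum_ind R V v (fun u => ln (pib u q))).
  by apply: eq_bigr => u _; rewrite eq_sym mulrC.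
have -> : attn2 wE r Phi1 T z tau1 tau2 =
   (fun s => tau2 * dotv (x1 wE r Phi1 z tau1 s) (Phi1 *m wE q)).
  by apply/funext => s'; rewrite Lattn2.
by [].
Qed.


Lemma beta_cvg s : (s < T)%N ->
  dotv (x1 wE r Phi1 z tau1 s) (Phi1 *m wE q) @[tau1 --> +oo] --> ((z s.-1 == q)%:R : R).
Proof.
case: s => [|k] hk.
  apply: (cvg_ext (fun _ => (z 0 == q)%:R)); last exact: cvg_cst.
  move=> t; rewrite Lbeta big_nat1 /softmax big_nat1 divff ?mul1r //.
  by rewrite gt_eqF // expR_gt0.
rewrite /= -[X in _ --> X]divr1.
set S := \sum_(0 <= s' < k.+2) ((z s' == q)%:R : R).
apply: (@lim_ratio R _ (S - (z k == q)%:R) _ k.+1%:R) => // t.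
have E : forall (w : nat -> R), \sum_(0 <= s' < k.+2) expR (attn1 wE r z t k.+1 s') * w s'
    = (expR t - 1) * w k + \sum_(0 <= s' < k.+2) w s'.
  move=> w.
  transitivity (\sum_(0 <= s' < k.+2) (w s' + (expR t - 1) * ((s' == k)%:R * w s'))).
    apply: eq_big_nat => s' /andP[_ hs'].
    rewrite Lattn1 // (_ : (k.+1 - s' == 1)%N = (s' == k)); last by apply/eqP/eqP; lia.
    rewrite expR_ind; ring.
  by rewrite big_split /= -mulr_sumr sum_nat_ind // addrC.
have E1 : \sum_(0 <= s' < k.+2) expR (attn1 wE r z t k.+1 s') =
    (expR t - 1) * 1 + \sum_(0 <= s' < k.+2) (1:R).
  by rewrite -(E (fun _ => 1)); apply: eq_bigr => s' _; rewrite mulr1.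
rewrite Lbeta softmax_sum E E1 sumr_const_nat subn0 mulrS.
rewrite /S; congr (_ / _); ring.
Qed.

Definition Lim1 (tau2 tau3 : R) (v : 'I_V) : R :=
  ln (pib v q) + tau3 * ((\sum_(0 <= s < T) expR (tau2 * (z s.-1 == q)%:R) * (z s == v)%:R)
     / \sum_(0 <= s < T) expR (tau2 * (z s.-1 == q)%:R)).

Lemma sum_exp_gt0 (F : nat -> R) : 0 < \sum_(0 <= s < T) expR (F s).
Proof.
rewrite big_ltn; last by apply: leq_trans HT.
have := expR_gt0 (F 0%N).
have : 0 <= \sum_(1 <= s < T) expR (F s) by apply: sumr_ge0 => s _; exact: expR_ge0.
lra.
Qed.

Lemma xi_cvg1 tau2 tau3 v :
  xi wE wU r Phi1 WV2 pib T z tau1 tau2 tau3 v @[tau1 --> +oo] --> Lim1 tau2 tau3 v.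
Proof.
apply: (cvg_ext (fun t => ln (pib v q) + tau3 *
   ((\sum_(0 <= s < T) expR (tau2 * dotv (x1 wE r Phi1 z t s) (Phi1 *m wE q)) * (z s == v)%:R)
     / \sum_(0 <= s < T) expR (tau2 * dotv (x1 wE r Phi1 z t s) (Phi1 *m wE q))))).
  by move=> t; rewrite Lxi softmax_sum.
have hs : forall s, s \in index_iota 0 T ->
    expR (tau2 * dotv (x1 wE r Phi1 z t s) (Phi1 *m wE q)) @[t --> +oo]
    --> expR (tau2 * (z s.-1 == q)%:R).
  move=> s; rewrite mem_index_iota => /andP[_ hsT].
  apply: (@continuous_cvg _ _ _ _ _ (fun t => tau2 * dotv (x1 wE r Phi1 z t s) (Phi1 *m wE q)) expR).
    exact: continuous_expR.
  by apply: cvgM; [exact: cvg_cst | exact: beta_cvg].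
apply: cvgD; first exact: cvg_cst.
apply: cvgM; first exact: cvg_cst.
apply: cvgM.
  apply: cvg_sum_seq => s hsi; apply: cvgM; [exact: hs | exact: cvg_cst].
apply: cvgV; first by rewrite gt_eqF // sum_exp_gt0.
exact: cvg_sum_seq.
Qed.

Lemma sum_c_nat : (Ncount T z q)%:R = \sum_(0 <= s < T) ((z s.-1 == q)%:R : R).
Proof.
rewrite -natr_sum; congr (_%:R).
rewrite /Ncount /fcount exchange_big /= [in RHS]big_ltn; last by apply: leq_trans HT.
rewrite addnC /=; congr (_ + _)%N; apply: eq_bigr => s _.
rewrite (bigD1 (z s)) //= eqxx andbT big1 ?addn0 // => v' hv'.
by rewrite (_ : (z s == v') = false) ?andbF //; apply/negbTE; rewrite eq_sym.
Qed.

Lemma sum_cw_nat v : (fcount T z q v + (v == q) * (z 0%N == q))%:R =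
  \sum_(0 <= s < T) ((z s.-1 == q)%:R * (z s == v)%:R : R).
Proof.
under [RHS]eq_bigr => s _ do rewrite -natrM.
rewrite -natr_sum; congr (_%:R).
rewrite [in RHS]big_ltn; last by apply: leq_trans HT.
rewrite addnC /fcount; congr (_ + _)%N; last first.
  by apply: eq_bigr => s _; rewrite mulnb.
rewrite /=; case h: (z 0%N == q); first by move/eqP: h => ->; rewrite eq_sym muln1 mul1n.
by rewrite muln0 mul0n.
Qed.

Lemma Lim1_cvg tau3 v : (1 <= Ncount T z q)%N ->
  Lim1 tau2 tau3 v @[tau2 --> +oo] -->
  ln (pib v q) + tau3 * ((fcount T z q v + (v == q) * (z 0%N == q))%:R / (Ncount T z q)%:R).
Proof.
move=> hN; rewrite /Lim1.
apply: cvgD; first exact: cvg_cst.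
apply: cvgM; first exact: cvg_cst.
have hNr : 0 < ((Ncount T z q)%:R : R) by rewrite ltr0n.
rewrite sum_c_nat sum_cw_nat in hNr *.
set A := \sum_(0 <= s < T) ((z s.-1 == q)%:R * (z s == v)%:R : R).
set Nr := \sum_(0 <= s < T) ((z s.-1 == q)%:R : R).
set W := \sum_(0 <= s < T) ((z s == v)%:R : R).
have hNT : Nr <= T%:R.
  rewrite -[T in X in _ <= X]subn0 -sumr_const_nat /Nr.
  by apply: ler_sum => s _; rewrite lern1 leq_b1.
apply: (@lim_ratio R A (W - A) Nr (T%:R - Nr)) => //; first by rewrite subr_ge0.
move=> t.
have EN : \sum_(0 <= s < T) expR (t * (z s.-1 == q)%:R) * (z s == v)%:R =
    W + (expR t - 1) * A.
  rewrite /W /A mulr_sumr -big_split /=; apply: eq_bigr => s _.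
  rewrite expR_ind; ring.
have ED : \sum_(0 <= s < T) expR (t * (z s.-1 == q)%:R) =
    T%:R + (expR t - 1) * Nr.
  rewrite /Nr mulr_sumr -[T in T%:R]subn0 -sumr_const_nat -big_split /=.
  by apply: eq_bigr => s _; rewrite expR_ind.
rewrite EN ED; congr (_ / _); ring.
Qed.

End Main.

Theorem proposition3 (R : realType) (V d : nat)
  (wE wU : 'I_V -> 'cV[R]_d) (r : nat -> 'cV[R]_d) (Phi1 WV2 : 'M[R]_d)
  (pib : 'I_V -> 'I_V -> R) (T : nat) (z : nat -> 'I_V) (q : 'I_V) (tau3 : R) :
  (forall u v, 0 < pib u v) ->
  (forall v, \sum_(u < V) pib u v = 1) ->
  (2 <= T)%N ->
  z T.-1 = q ->
  (* assumption (A), first family: w_E(v), Phi1 w_E(v), w_U(v), r_{-i} (0 <= i <= T-1) *)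
  orthonormal_fam (fun i : ('I_V + 'I_V) + ('I_V + 'I_T) =>
    match i with
    | inl (inl v) => wE v
    | inl (inr v) => Phi1 *m wE v
    | inr (inl v) => wU v
    | inr (inr k) => r (val k)
    end) ->
  (* assumption (A), second family: W_V^2 w_E(v), W_V^2 Phi1 w_E(v) *)
  orthonormal_fam (fun i : 'I_V + 'I_V =>
    match i with
    | inl v => WV2 *m wE v
    | inr v => WV2 *m (Phi1 *m wE v)
    end) ->
  (1 <= Ncount T z q)%N ->
  0 < tau3 ->
  forall v : 'I_V,
    (forall tau2 : R, 0 < tau2 ->
       cvg ((xi wE wU r Phi1 WV2 pib T z tau1 tau2 tau3 v) @[tau1 --> +oo])) /\
    (lim ((xi wE wU r Phi1 WV2 pib T z tau1 tau2 tau3 v) @[tau1 --> +oo]))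
      @[tau2 --> +oo] -->
      ln (pib v q) + tau3 * ((fcount T z q v + (v == q) * (z 0%N == q))%:R
                              / (Ncount T z q)%:R).
Proof.
move=> _ _ HT Hq H1 H2 hN _ v; split.
  move=> tau2 _; apply: cvgP; apply: xi_cvg1 => //.
apply: (cvg_ext (fun tau2 => Lim1 _ _ pib T z q tau2 tau3 v)).
  move=> t; apply: cvg_lim; first exact: Rhausdorff.
  by apply: xi_cvg1.
by apply: Lim1_cvg.
Qed.
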